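(* Let $\mathcal{G}\simeq\mathcal{H}$ be equivalent graph sequences and let $K$ be a field. Then $\beta_K(\mathcal{G})=\beta_K(\mathcal{H})$.
   Context: A graph sequence is a sequence $\mathcal{G}=\{G_n\}$ of finite simple graphs with uniformly bounded vertex degrees and $|V(G_n)|\to\infty$. For graph sequences with $V(H_n)=V(G_n)$, $\mathcal{H}\prec\mathcal{G}$ means there is an integer $L>0$ with $d_{G_n}(x,y)\le L\,d_{H_n}(x,y)$ for all $n,x,y$ (shortest path metrics), and $\mathcal{G}\simeq\mathcal{H}$ means $\mathcal{H}\prec\mathcal{G}$ and $\mathcal{G}\prec\mathcal{H}$. For a finite graph $G$, $\varepsilon_K(G)$ is the $K$-vector space spanned by oriented edges with $(x,y)=-(y,x)$; a cycle $(x_1,\dots,x_m,x_1)$ gives the vector $\sum_{i=1}^{m-1}(x_i,x_{i+1})+(x_m,x_1)$; $C^q_K(G)$ is the subspace spanned by the vectors of cycles of length at most $q$. $s^q_K(\mathcal{G})=\liminf_n \frac{|E(G_n)|-\dim_K C^q_K(G_n)}{|V(G_n)|}-1$ and $\beta_K(\mathcal{G})=\inf_q s^q_K(\mathcal{G})$. *)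

(* Defs.v *)
From HB Require Import structures.
From mathcomp Require Import all_boot all_order all_algebra.
From mathcomp Require Import all_classical all_reals all_analysis.
Set Implicit Arguments. Unset Strict Implicit. Unset Printing Implicit Defensive.
Import Order.TTheory GRing.Theory Num.Theory.

Definition simple_graph (T : finType) (e : rel T) :=
  symmetric e /\ irreflexive e.

Definition walk (T : finType) (e : rel T) (k : nat) (x y : T) : bool :=
  [exists p : k.-tuple T, path e x p && (last x p == y)].

(* shortest path distance; None = infinity (x, y in different components).
   If y is reachable from x, a shortest walk has length < #|T|. *)
Definition gdist (T : finType) (e : rel T) (x y : T) : option nat :=
  if [exists k : 'I_#|T|, walk e k x y]
  then Some (find (fun k => walk e k x y) (iota 0 #|T|))
  else None.

Definition dist_le (L : nat) (dG dH : option nat) : bool :=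
  match dG, dH with
  | _, None => true
  | None, Some _ => false
  | Some a, Some b => (a <= L * b)%N
  end.

Definition graph_seq (V : nat -> finType) (g : forall n, rel (V n)) :=
  [/\ forall n, simple_graph (g n),
      exists D : nat, forall n (x : V n), (#|[set y | g n x y]| <= D)%N
    & forall M : nat, exists N : nat, forall n, (N <= n)%N -> (M <= #|V n|)%N].

Definition seq_prec (V : nat -> finType) (h g : forall n, rel (V n)) :=
  exists L : nat, (0 < L)%N /\
    forall n (x y : V n), dist_le L (gdist (g n) x y) (gdist (h n) x y).

Definition seq_equiv (V : nat -> finType) (g h : forall n, rel (V n)) :=
  seq_prec h g /\ seq_prec g h.

Definition nedges (T : finType) (e : rel T) : nat :=
  #|[set A : {set T} | [exists x, exists y, e x y && (A == [set x; y])]]|.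

(* the ambient space: antisymmetric-by-construction vectors, coordinates
   indexed by ordered pairs of vertices (flattened matrices). The oriented
   edge (x,y) is the vector E_xy - E_yx, so that (x,y) = -(y,x); the oriented
   edges of G span eps_K(G). *)
Definition oedge (K : fieldType) (T : finType) (x y : T) : 'rV[K]_(#|T| * #|T|) :=
  mxvec (delta_mx (enum_rank x) (enum_rank y) - delta_mx (enum_rank y) (enum_rank x)).

Definition cycvec (K : fieldType) (T : finType) (s : seq T) : 'rV[K]_(#|T| * #|T|) :=
  match s with
  | [::] => 0
  | x1 :: _ =>
      \sum_(i < (size s).-1) oedge K (nth x1 s i) (nth x1 s i.+1)
      + oedge K (last x1 s) x1
  end.

Definition is_cycle (T : finType) (e : rel T) (s : seq T) : bool :=
  uniq s && cycle e s.

Definition Cq (K : fieldType) (T : finType) (e : rel T) (q : nat) :=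
  (\sum_(m < q.+1) \sum_(s : m.-tuple T | is_cycle e s)
      <<cycvec K (s : seq T)>>)%MS.

Definition dimCq (K : fieldType) (T : finType) (e : rel T) (q : nat) : nat :=
  \rank (Cq K e q).

Local Open Scope ring_scope.

Definition sq_term (K : fieldType) (R : realType) (V : nat -> finType)
  (g : forall n, rel (V n)) (q n : nat) : R :=
  ((nedges (g n))%:R - (dimCq K (g n) q)%:R) / (#|V n|)%:R.

Local Open Scope ereal_scope.

Definition s_q (K : fieldType) (R : realType) (V : nat -> finType)
  (g : forall n, rel (V n)) (q : nat) : \bar R :=
  limn_einf (fun n => (sq_term K R g q n)%:E) - 1%:E.

Definition beta (K : fieldType) (R : realType) (V : nat -> finType)
  (g : forall n, rel (V n)) : \bar R :=
  ereal_inf [set s_q K R g q | q in [set: nat]].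

(* Main.v *)
Require Import Defs.
From HB Require Import structures.
From mathcomp Require Import all_boot all_order all_algebra.
From mathcomp Require Import all_classical all_reals all_analysis.
From mathcomp Require Import zify lra.
Set Implicit Arguments. Unset Strict Implicit. Unset Printing Implicit Defensive.
Import Order.TTheory GRing.Theory Num.Theory.
Local Open Scope ring_scope.

Lemma gen_sub2 (F : fieldType) m1 m2 n (A : 'M[F]_(m1,n)) (B : 'M[F]_(m2,n)) :
  (A <= B)%MS -> (<<A>> <= <<B>>)%MS.
Proof. by rewrite !genmxE. Qed.

Lemma sum_mul_sub (F : fieldType) (I : finType) (P : pred I) n (A_ : I -> 'M[F]_n)
  (B : 'M[F]_n) m (C : 'M[F]_(m, n)) :
  (forall i, P i -> (A_ i *m B <= C)%MS) -> ((\sum_(i | P i) A_ i)%MS *m B <= C)%MS.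
Proof. by move=> H; rewrite sumsmxMr; apply/sumsmx_subP. Qed.

Lemma gen_mul_sub (F : fieldType) n (v : 'rV[F]_n) (B : 'M[F]_n) m (C : 'M[F]_(m, n)) :
  (v *m B <= C)%MS -> (<<v>>%MS *m B <= C)%MS.
Proof. by move=> H; apply: submx_trans H; apply: submxMr; rewrite genmxE. Qed.

Lemma gen_le (F : fieldType) n (v : 'rV[F]_n) m (C : 'M[F]_(m, n)) :
  (v <= C)%MS -> (<<v>>%MS <= C)%MS.
Proof. by rewrite genmxE. Qed.

Section Vec.
Variables (K : fieldType) (T : finType).
Local Notation N := (#|T| * #|T|)%N.
Local Notation oe := (@oedge K T).

Fixpoint wvec (x : T) (p : seq T) : 'rV[K]_N :=
  if p is y :: t then oe x y + wvec y t else 0.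

Lemma oedgeN (x y : T) : oe y x = - oe x y.
Proof. by rewrite /oedge -linearN /= opprB. Qed.

Lemma wvec_cat (x : T) p q : wvec x (p ++ q) = wvec x p + wvec (last x p) q.
Proof. by elim: p x => [|y p IH] x /=; rewrite ?add0r // IH addrA. Qed.

Lemma last_rev_belast (x : T) (p : seq T) : last (last x p) (rev (belast x p)) = x.
Proof. by case: p => [|z t] //=; rewrite rev_cons last_rcons. Qed.

Lemma wvec_rev (x : T) p : wvec (last x p) (rev (belast x p)) = - wvec x p.
Proof.
elim: p x => [|y t IH] x /=; first by rewrite oppr0.
rewrite rev_cons -cats1 wvec_cat IH /= last_rev_belast addr0 oedgeN.
by rewrite opprD addrC.
Qed.

Lemma sum_wvec (t : seq T) x :
  \sum_(i < size t) oe (nth x (x :: t) i) (nth x (x :: t) i.+1) = wvec x t.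
Proof.
elim: t x => [|y t IH] x /=; first by rewrite big_ord0.
rewrite big_ord_recl /= -(IH y); congr (_ + _); apply: eq_bigr => i _ /=.
rewrite [nth x (y :: t) i](set_nth_default y) /=; last by rewrite ltnS ltnW.
by rewrite [nth x t i](set_nth_default y).
Qed.

Lemma cycvecE (x : T) t : cycvec K (x :: t) = wvec x (rcons t x).
Proof.
rewrite /cycvec /= sum_wvec -cats1 wvec_cat /= addr0 //.
Qed.


Lemma notuniq_split (s : seq T) : ~~ uniq s ->
  exists a z b c, s = a ++ z :: b ++ z :: c.
Proof.
elim: s => [|y t IH] //=; rewrite negb_and negbK => /orP [yt|/IH [a [z [b [c ->]]]]].
  by case/splitPr: yt => b c; exists [::], y, b, c.
by exists (y :: a), z, b, c.
Qed.

Variable e : rel T.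

Lemma cycle_in (s : seq T) m : is_cycle e s -> (size s <= m)%N ->
  (cycvec K s <= Cq K e m)%MS.
Proof.
move=> cs sm; rewrite /Cq.
have ltm : (size s < m.+1)%N by [].
apply: (sumsmx_sup (Ordinal ltm)) => //.
apply: (sumsmx_sup (@Tuple (size s) T s (eqxx _))) => //.
by rewrite genmxE.
Qed.

Lemma closed_walk_in m p x : path e x p -> last x p = x -> (size p <= m)%N ->
  (wvec x p <= Cq K e m)%MS.
Proof.
have [n] := ubnP (size p); elim: n p x => // n IH p x szp pp lp sm.
have [up|nup] := boolP (uniq p).
  case: p szp pp lp sm up => [|y t] szp pp lp sm up /=; first by rewrite sub0mx.
  have cs : is_cycle e (y :: t).
    rewrite /is_cycle up /= rcons_path.
    by move: pp lp => /= /andP [exy pyt] ->; rewrite pyt exy.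
  have := cycle_in cs sm; rewrite cycvecE -cats1 wvec_cat /= -[last y t]/(last x (y :: t)) lp addr0 addrC //.
have [a [z [b [c pE]]]] := notuniq_split nup.
have -> : wvec x p = wvec x (a ++ z :: c) + wvec z (b ++ [:: z]).
  rewrite pE !wvec_cat /= !wvec_cat /= addr0 -!addrA; congr (_ + (_ + _)).
  by rewrite [RHS]addrC addrA.
move: pp lp szp sm; rewrite pE !cat_path /= !cat_path /= => /and5P [pa ez pb ez2 pc].
rewrite !last_cat /= last_cat /= => lc szp sm.
apply: addmx_sub.
  apply: IH.
  - move: szp; rewrite !size_cat /= size_cat /=; lia.
  - by rewrite cat_path /= pa ez pc.
  - by rewrite last_cat /=.
  - move: sm; rewrite !size_cat /= size_cat /=; lia.
apply: IH.
- move: szp; rewrite !size_cat /= size_cat /=; lia.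
- by rewrite cat_path /= pb ez2.
- by rewrite last_cat.
- move: sm; rewrite !size_cat /= size_cat /=; lia.
Qed.


Definition Bsp : 'M[K]_N :=
  (\sum_(pr : T * T | e pr.1 pr.2) <<oe pr.1 pr.2>>)%MS.

Lemma oedge_in x y : e x y -> (oe x y <= Bsp)%MS.
Proof. by move=> exy; apply: (sumsmx_sup (x, y)) => //; rewrite genmxE. Qed.

Lemma walk_in x p : path e x p -> (wvec x p <= Bsp)%MS.
Proof.
elim: p x => [|y t IH] x /=; first by rewrite sub0mx.
by case/andP => exy pt; apply: addmx_sub; [exact: oedge_in|exact: IH].
Qed.

Lemma Cq_in_B m : (Cq K e m <= Bsp)%MS.
Proof.
apply/sumsmx_subP => i _; apply/sumsmx_subP => s cs; rewrite genmxE.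
move: cs; case: s => [[|y t] sz]; rewrite /is_cycle /=; first by rewrite sub0mx.
case/andP => _ cs.
by move: (cycvecE y t); rewrite /cycvec /= => ->; apply: walk_in.
Qed.


Definition Sset := [set A : {set T} | [exists x, exists y, e x y && (A == [set x; y])]].

Definition pr (A : {set T}) : option (T * T) :=
  if [pick z in A] is Some a then
    (if [pick z in A :\ a] is Some b then Some (a, b) else None) else None.

Lemma pr2 x y : x != y -> exists a b, pr [set x; y] = Some (a, b) /\
  ((a, b) = (x, y) \/ (a, b) = (y, x)).
Proof.
move=> nxy; rewrite /pr; case: pickP => [a Ha|H]; last by have := H x; rewrite !inE eqxx.
case: pickP => [b Hb|H].
  exists a, b; split => //.
  move: Ha Hb; rewrite !inE => /orP [/eqP ->|/eqP ->] /andP [nb /orP [/eqP bE|/eqP bE]];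
    subst b; rewrite ?eqxx // in nb; by [left|right].
move: Ha; rewrite !inE => /orP [/eqP aE|/eqP aE].
  by have := H y; rewrite !inE aE eq_sym nxy eqxx orbT.
by have := H x; rewrite !inE aE nxy eqxx.
Qed.

Hypothesis esym : symmetric e.
Hypothesis eirr : irreflexive e.

Lemma edge_neq x y : e x y -> x != y.
Proof. by apply: contraTneq => ->; rewrite eirr. Qed.

Lemma prS A : A \in Sset -> exists a b, pr A = Some (a, b) /\ A = [set a; b] /\ e a b.
Proof.
rewrite inE => /existsP [x /existsP [y /andP [exy /eqP ->]]].
have [a [b [Hp [[? ?]|[? ?]]]]] := pr2 (edge_neq exy); subst.
  by exists x, y.
by exists y, x; rewrite Hp finset.setUC esym.
Qed.

Definition fA (A : {set T}) := if pr A is Some (a, b) then oe a b else 0.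

Lemma rank_sum_le (I : finType) (P : pred I) (B : I -> 'M[K]_N) :
  (\rank (\sum_(i | P i) B i)%MS <= \sum_(i | P i) \rank (B i))%N.
Proof.
elim/big_rec2: _ => [|i y A _ IH]; first by rewrite mxrank0.
apply: leq_trans (mxrank_adds_leqif _ _).1 _; exact: leq_add.
Qed.

Lemma rankB_le : (\rank Bsp <= nedges e)%N.
Proof.
have sub : (Bsp <= \sum_(A in Sset) <<fA A>>)%MS.
  apply/sumsmx_subP => [[x y]] /= exy.
  apply: (sumsmx_sup [set x; y]).
    by rewrite inE; apply/existsP; exists x; apply/existsP; exists y; rewrite exy eqxx.
  apply: gen_sub2; rewrite /fA.
  have [a [b [-> [[? ?]|[? ?]]]]] := pr2 (edge_neq exy); subst => /=; first exact: submx_refl.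
  by rewrite oedgeN -scaleN1r scalemx_sub.
apply: leq_trans (mxrankS sub) _; apply: leq_trans (rank_sum_le _ _) _.
rewrite /nedges -/Sset -sum1_card; apply: leq_sum => A _.
by rewrite mxrank_gen rank_leq_row.
Qed.


Definition Qm : 'M[K]_(N, #|Sset|) := \matrix_(i, j)
  (if pr (enum_val j) is Some (a, b) then
     (i == mxvec_index (enum_rank a) (enum_rank b))%:R else 0).

Lemma mulQ (v : 'rV[K]_N) j : (v *m Qm) 0 j =
  if pr (enum_val j) is Some (a, b) then v 0 (mxvec_index (enum_rank a) (enum_rank b)) else 0.
Proof.
rewrite mxE; under eq_bigr do rewrite mxE.
case: (pr _) => [[a b]|]; last by rewrite big1 // => i _; rewrite mulr0.
rewrite (bigD1 (mxvec_index (enum_rank a) (enum_rank b))) //= eqxx mulr1 big1 ?addr0 //.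
by move=> i /negbTE ->; rewrite mulr0.
Qed.

Lemma oe_entry x y a b : (oe x y) 0 (mxvec_index (enum_rank a) (enum_rank b)) =
  ((a == x) && (b == y))%:R - ((a == y) && (b == x))%:R.
Proof. by rewrite /oedge mxvecE !mxE !(inj_eq enum_rank_inj). Qed.

Lemma delta_in j : ((delta_mx 0 j : 'rV[K]_#|Sset|) <= Bsp *m Qm)%MS.
Proof.
have /prS [x [y [Hp [Ej exy]]]] := enum_valP (A:=Sset) j.
have nxy := edge_neq exy.
have E : oe x y *m Qm = delta_mx 0 j.
  apply/rowP => k; rewrite mulQ mxE.
  have [->|nkj] := eqVneq k j.
    by rewrite Hp oe_entry !eqxx /= (negbTE nxy) subr0.
  have /prS [a [b [Hp' [Ek eab]]]] := enum_valP (A:=Sset) k; rewrite Hp' oe_entry /=.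
  have [/andP [/eqP ax /eqP bx]|] := boolP ((a == x) && (b == y)).
    by case/eqP: nkj; apply: enum_val_inj; rewrite Ek Ej ax bx.
  have [/andP [/eqP ay /eqP bx]|] := boolP ((a == y) && (b == x)).
    by case/eqP: nkj; apply: enum_val_inj; rewrite Ek Ej ay bx finset.setUC.
  by move=> _ _; rewrite subrr.
rewrite -E; apply: submxMr; exact: oedge_in.
Qed.

Lemma rankB_ge : (nedges e <= \rank Bsp)%N.
Proof.
have : (1%:M <= Bsp *m Qm)%MS by apply/row_subP => j; rewrite row1; exact: delta_in.
move/mxrankS; rewrite mxrank1 => H; apply: leq_trans H (mxrankM_maxl _ _).
Qed.

End Vec.

Section Dist.
Variable T : finType.

Lemma gdist_walk (e : rel T) x y d : gdist e x y = Some d ->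
  exists p : seq T, [/\ size p = d, path e x p & last x p = y].
Proof.
rewrite /gdist; case: ifP => // /existsP [k Hk] [<-].
set P := (fun k => walk e k x y).
have hs : has P (iota 0 #|T|).
  by apply/hasP; exists (val k) => //; rewrite mem_iota /= add0n ltn_ord.
have := nth_find 0 hs; rewrite nth_iota; last by move: hs; rewrite has_find size_iota.
rewrite add0n => /existsP [t /andP [pt /eqP lt]].
by exists t; rewrite size_tuple.
Qed.

Lemma gdist_edge (e : rel T) x y : e x y -> x != y ->
  exists2 d, gdist e x y = Some d & (d <= 1)%N.
Proof.
move=> exy nxy.
have w1 : walk e 1 x y by apply/existsP; exists [tuple y]; rewrite /= exy eqxx.
have cT : (1 < #|T|)%N by have := max_card (mem [set x; y]); rewrite cards2 nxy.
rewrite /gdist.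
have -> : [exists k : 'I_#|T|, walk e k x y] by apply/existsP; exists (Ordinal cT).
eexists; first reflexivity.
rewrite leqNgt; apply/negP => H; have := before_find 0 H.
by rewrite nth_iota // add0n w1.
Qed.

Lemma dist_walk L (g h : rel T) x y : dist_le L (gdist g x y) (gdist h x y) ->
  h x y -> x != y -> exists p, [/\ path g x p, last x p = y & (size p <= L)%N].
Proof.
move=> D hxy nxy; have [d Hd d1] := gdist_edge hxy nxy.
move: D; rewrite Hd /dist_le; case E: (gdist g x y) => [d'|] // Hle.
have [p [sp pp lp]] := gdist_walk E; exists p; split => //.
by rewrite sp; apply: leq_trans Hle _; rewrite -{2}(muln1 L) leq_mul2l d1 orbT.
Qed.

End Dist.

Section Psi.
Variables (K : fieldType) (T : finType) (g h : rel T).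
Local Notation N := (#|T| * #|T|)%N.
Local Notation oe := (@oedge K T).
Local Notation er := (@enum_rank T).
Hypotheses (gsym : symmetric g) (hsym : symmetric h) (girr : irreflexive g) (hirr : irreflexive h).
Variable L1 : nat.
Variable pw : T -> T -> seq T.
Hypothesis Hpw : forall x y, h x y ->
  [/\ path g x (pw x y), last x (pw x y) = y & (size (pw x y) <= L1)%N].

Definition Fpw (pr : T * T) : 'rV[K]_N :=
  if (er pr.1 < er pr.2)%N then wvec K pr.1 (pw pr.1 pr.2) else 0.

Definition Pm : 'M[K]_N :=
  \sum_(pr : T * T) (delta_mx (mxvec_index (er pr.1) (er pr.2)) 0 : 'cV[K]_N) *m Fpw pr.

Lemma rowcol n (v : 'rV[K]_n) (i : 'I_n) : v *m (delta_mx i 0 : 'cV[K]_n) = (v 0 i)%:M.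
Proof.
apply/matrixP => a b; rewrite !ord1 !mxE (bigD1 i) //= big1 ?addr0.
  by rewrite !mxE !eqxx mulr1.
by move=> k /negbTE nk; rewrite mxE nk mulr0.
Qed.

Lemma big_delta (F : T * T -> 'rV[K]_N) p0 :
  \sum_(pr : T * T) (pr == p0)%:R *: F pr = F p0.
Proof.
rewrite (bigD1 p0) //= eqxx scale1r big1 ?addr0 //.
by move=> i /negbTE ->; rewrite scale0r.
Qed.

Lemma oedge_P x y : x != y ->
  oe x y *m Pm = if (er x < er y)%N then wvec K x (pw x y) else - wvec K y (pw y x).
Proof.
move=> nxy; rewrite /Pm mulmx_sumr.
under eq_bigr do rewrite mulmxA rowcol mul_scalar_mx oe_entry.
have E : forall pr : T * T, ((pr.1 == x) && (pr.2 == y))%:R - ((pr.1 == y) && (pr.2 == x))%:R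
    = (pr == (x, y))%:R - (pr == (y, x))%:R :> K.
  by case.
under eq_bigr do rewrite E scalerBl.
rewrite sumrB !big_delta /Fpw /=.
have nr : er x != er y by rewrite (inj_eq enum_rank_inj).
case: ltngtP => [_|_|/val_inj/eqP]; rewrite ?subr0 ?sub0r //.
by rewrite (negbTE nr).
Qed.

Lemma psi_edge x y : h x y -> exists p,
  [/\ path g x p, last x p = y, (size p <= L1)%N & oe x y *m Pm = wvec K x p].
Proof.
move=> hxy; have nxy : x != y by apply: contraTneq hxy => ->; rewrite hirr.
rewrite oedge_P //; case: ifP => _.
  by have [pp lp sp] := Hpw hxy; exists (pw x y).
have hyx : h y x by rewrite hsym.
have [pp lp sp] := Hpw hyx.
set q := pw y x in pp lp sp *.
exists (rev (belast y q)); split.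
- have -> : path g x (rev (belast y q)) = path g (last y q) (rev (belast y q)) by rewrite lp.
  rewrite rev_path; rewrite (@eq_path _ _ g) //.
- by have := last_rev_belast y q; rewrite lp.
- by rewrite size_rev size_belast.
- by have := wvec_rev K y q; rewrite lp.
Qed.

Lemma psi_walk p x : path h x p -> exists p',
  [/\ path g x p', last x p' = last x p, (size p' <= L1 * size p)%N & wvec K x p *m Pm = wvec K x p'].
Proof.
elim: p x => [|y t IH] x /=; first by exists [::]; rewrite mul0mx muln0.
case/andP => hxy pt.
have [p1 [pp1 lp1 sp1 E1]] := psi_edge hxy.
have [p2 [pp2 lp2 sp2 E2]] := IH y pt.
exists (p1 ++ p2); split.
- by rewrite cat_path pp1 lp1.
- by rewrite last_cat lp1.
- by rewrite size_cat mulnS leq_add.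
- by rewrite mulmxDl E1 E2 wvec_cat lp1.
Qed.

End Psi.
Lemma rank_ineq (F : fieldType) n (BG BH C C' P : 'M[F]_n) :
  (BG <= BH *m P + C)%MS -> (C' *m P <= C)%MS -> (C' <= BH)%MS ->
  (\rank BG + \rank C' <= \rank BH + \rank C)%N.
Proof.
move=> s1 s2 s3.
have r1 := mxrankS s1; have e1 := mxrank_sum_cap (BH *m P) C.
have s4 : (C' *m P <= BH *m P :&: C)%MS by rewrite sub_capmx submxMr.
have r4 := mxrankS s4.
have e2 := mxrank_mul_ker BH P; have e3 := mxrank_mul_ker C' P.
have r5 : (\rank (C' :&: kermx P) <= \rank (BH :&: kermx P))%N.
  by apply: mxrankS; apply: capmxS.
lia.
Qed.

Section Key.
Variables (K : fieldType) (T : finType) (g h : rel T).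
Local Notation N := (#|T| * #|T|)%N.
Local Notation oe := (@oedge K T).
Hypotheses (gsym : symmetric g) (hsym : symmetric h) (girr : irreflexive g) (hirr : irreflexive h).
Variables L1 L2 : nat.
Hypothesis H2 : forall x y, dist_le L2 (gdist h x y) (gdist g x y).
Variable pw : T -> T -> seq T.
Hypothesis Hpw : forall x y, h x y ->
  [/\ path g x (pw x y), last x (pw x y) = y & (size (pw x y) <= L1)%N].

Local Notation P := (Pm K pw).

Lemma F2 q' q : (L1 * q' <= q)%N -> (Cq K h q' *m P <= Cq K g q)%MS.
Proof.
move=> le; apply: sum_mul_sub => i _; apply: sum_mul_sub => s cs; apply: gen_mul_sub.
move: cs; case: s => [[|y t] sz]; rewrite /is_cycle /=; first by rewrite mul0mx sub0mx.
case/andP => _ cs.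
move: (cycvecE K y t); rewrite /cycvec /= => ->.
have [p' [pp lp sp E]] := psi_walk K gsym hsym hirr Hpw cs.
rewrite E; apply: (closed_walk_in K) => //.
  by rewrite lp last_rcons.
apply: leq_trans sp _; apply: leq_trans le; rewrite leq_mul2l size_rcons.
by have := ltn_ord i; rewrite -(eqP sz) /= ltnS => ->; rewrite orbT.
Qed.

Lemma F3 q : ((L1 * L2).+1 <= q)%N -> (Bsp K g <= Bsp K h *m P + Cq K g q)%MS.
Proof.
move=> le; apply/sumsmx_subP => [[x y]] /= gxy; apply: gen_le.
have nxy : x != y by apply: contraTneq gxy => ->; rewrite girr.
have [p [pp lp sp]] := dist_walk (H2 x y) gxy nxy.
have [p' [pp' lp' sp' E]] := psi_walk K gsym hsym hirr Hpw pp.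
rewrite lp in lp'.
have -> : oe x y = wvec K x p' + wvec K x (y :: rev (belast x p')).
  rewrite /=; have := wvec_rev K x p'; rewrite lp' => ->; rewrite addrC -addrA (addrC _ (wvec K x p')) subrr addr0 //.
apply: addmx_sub_adds.
  by rewrite -E; apply: submxMr; apply: (walk_in K).
apply: (closed_walk_in K) => /=.
- rewrite gxy /=; have := rev_path g x p'; rewrite lp' => ->.
  by rewrite (@eq_path _ _ g) // => a b; rewrite gsym.
- by have := last_rev_belast x p'; rewrite lp'.
- rewrite size_rev size_belast; apply: leq_trans le; rewrite ltnS.
  by apply: leq_trans sp' _; rewrite leq_mul2l sp orbT.
Qed.

End Key.

Lemma key_fin (K : fieldType) (T : finType) (g h : rel T) (L1 L2 : nat) :
  simple_graph g -> simple_graph h ->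
  (forall x y, dist_le L1 (gdist g x y) (gdist h x y)) ->
  (forall x y, dist_le L2 (gdist h x y) (gdist g x y)) ->
  forall q', (nedges g + dimCq K h q' <= nedges h + dimCq K g (L1 * q' + (L1 * L2).+1))%N.
Proof.
move=> [gsym girr] [hsym hirr] H1 H2 q'.
have [pw Hpw] : {pw : T * T -> seq T & forall pr, h pr.1 pr.2 ->
    [/\ path g pr.1 (pw pr), last pr.1 (pw pr) = pr.2 & (size (pw pr) <= L1)%N]}.
  apply: (@choice (T * T) (seq T) (fun pr p => h pr.1 pr.2 -> [/\ path g pr.1 p, last pr.1 p = pr.2 & (size p <= L1)%N])) => [[x y]] /=; case hxy: (h x y); last by exists [::].
  have nxy : x != y by apply: contraTneq hxy => ->; rewrite hirr.
  by have [p Hp] := dist_walk (H1 x y) hxy nxy; exists p.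
pose pw' := fun x y => pw (x, y).
have Hpw' : forall x y, h x y ->
    [/\ path g x (pw' x y), last x (pw' x y) = y & (size (pw' x y) <= L1)%N].
  by move=> x y; apply: (Hpw (x, y)).
set q := (L1 * q' + (L1 * L2).+1)%N.
have s1 : (Bsp K g <= Bsp K h *m Pm K pw' + Cq K g q)%MS.
  by apply: (F3 K gsym hsym girr hirr H2 Hpw'); rewrite /q leq_addl.
have s2 : (Cq K h q' *m Pm K pw' <= Cq K g q)%MS.
  by apply: (F2 K gsym hsym hirr Hpw'); rewrite /q leq_addr.
have r := rank_ineq s1 s2 (Cq_in_B K h q').
have a1 := rankB_ge K gsym girr; have a2 : (\rank (Bsp K h) <= nedges h)%N by apply: rankB_le.
rewrite /dimCq; lia.
Qed.

Local Close Scope ring_scope.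
Section Ana.
Local Open Scope ereal_scope.
Lemma einf_mono (R : realType) (u v : nat -> \bar R) :
  (forall n, u n <= v n) -> limn_einf u <= limn_einf v.
Proof.
move=> uv; rewrite !limn_einf_lim; apply: lee_lim; [exact: is_cvg_einfs|exact: is_cvg_einfs|].
apply: nearW => n /=; apply: le_ereal_inf_tmp => _ [m /= mn <-].
apply: le_trans (uv m); apply: ereal_inf_lbound; exists m => //.
Qed.
End Ana.

Lemma beta_le (K : fieldType) (R : realType) (V : nat -> finType)
  (g h : forall n, rel (V n)) :
  graph_seq g -> graph_seq h -> seq_prec h g -> seq_prec g h ->
  (beta K R g <= beta K R h)%E.
Proof.
move=> [sg _ _] [sh _ _] [L1 [_ H1]] [L2 [_ H2]].
apply: le_ereal_inf_tmp => _ [q' _ <-].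
apply: le_trans (ereal_inf_lbound _) _; first by exists (L1 * q' + (L1 * L2).+1)%N.
rewrite /s_q; apply: leeD2r; apply: einf_mono => n; rewrite lee_fin /sq_term.
apply: ler_wpM2r; first by rewrite invr_ge0 ler0n.
have := key_fin K (sg n) (sh n) (H1 n) (H2 n) q'.
rewrite -(ler_nat R) !natrD => H; lra.
Qed.

Theorem proposition2 (K : fieldType) (R : realType) (V : nat -> finType)
  (g h : forall n, rel (V n)) :
  graph_seq g -> graph_seq h -> seq_equiv g h ->
  beta K R g = beta K R h.
Proof.
move=> Hg Hh [Hhg Hgh]; apply/le_anti/andP; split; exact: beta_le.
Qed.
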